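(* Let $\tau\in\mathbb R$ and let $(\vartheta(s),\omega(s))$, $s\in J$ ($J$ an interval containing $0$), be a $C^1$ solution with $\vartheta(s)\in(-\pi/2,\pi/2)$ of $\dot\vartheta=\omega$, $\dot\omega=-\tau^2\tan\vartheta/\cos^2\vartheta$ with $\vartheta(0)=0$; let $E\ge0$ with $E^2=\omega^2+\tau^2\tan^2\vartheta$ (constant along the solution), assume $E^2+\tau^2>0$ and put $\Omega=\sqrt{E^2+\tau^2}$. Let $\varphi(s)$ satisfy $\dot\varphi(s)=\tau\tan^2\vartheta(s)$ on $J$. Then $$\varphi(s)-\varphi(0)=A(s)-\tau s\qquad(s\in J),$$ where $A$ is the continuous function on $J$ with $A(0)=0$ and $\tan A(s)=\frac{\tau}{\Omega}\tan(\Omega s)$ whenever $\cos(\Omega s)\ne0$ (i.e. $A(s)=\tan^{-1}\big(\frac{\tau}{\Omega}\tan\Omega s\big)$ continued continuously). *)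

(* Defs.v *)
From Stdlib Require Export Reals.
Open Scope R_scope.

Definition is_interval (J : R -> Prop) : Prop :=
  forall a b x, J a -> J b -> a <= x <= b -> J x.

Definition has_deriv_within (J : R -> Prop) (f : R -> R) (d : R) (x : R) : Prop :=
  forall eps, 0 < eps -> exists delta, 0 < delta /\
    forall y, J y -> y <> x -> Rabs (y - x) < delta ->
      Rabs ((f y - f x) / (y - x) - d) < eps.

Definition continuous_within (J : R -> Prop) (f : R -> R) (x : R) : Prop :=
  forall eps, 0 < eps -> exists delta, 0 < delta /\
    forall y, J y -> Rabs (y - x) < delta -> Rabs (f y - f x) < eps.

Definition A_spec (J : R -> Prop) (tau Om : R) (A : R -> R) : Prop :=
  (forall s, J s -> continuous_within J A s) /\ A 0 = 0 /\
  (forall s, J s -> cos (Om * s) <> 0 -> tan (A s) = tau / Om * tan (Om * s)).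

(* Main.v *)
Require Import Defs.
From Stdlib Require Import Reals Lra.
Open Scope R_scope.

Definition cl a b x := Rmax a (Rmin b x).

Lemma cl_in a b x : a <= b -> a <= cl a b x <= b.
Proof. intros; unfold cl, Rmax, Rmin; repeat destruct Rle_dec; lra. Qed.

Lemma cl_id a b x : a <= x <= b -> cl a b x = x.
Proof. intros; unfold cl, Rmax, Rmin; repeat destruct Rle_dec; lra. Qed.

Lemma cl_lip a b x y : a <= b -> Rabs (cl a b x - cl a b y) <= Rabs (x - y).
Proof.
  intros; unfold cl, Rmax, Rmin; repeat destruct Rle_dec;
  unfold Rabs; repeat destruct Rcase_abs; lra.
Qed.

Lemma C1 J f a b : a <= b -> (forall x, a <= x <= b -> J x) ->
  (forall x, a <= x <= b -> continuous_within J f x) ->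
  continuity (fun x => f (cl a b x)).
Proof.
  intros Hab HJ Hc x.
  unfold continuity_pt, continue_in, limit1_in, limit_in; simpl; unfold R_dist.
  intros eps Heps.
  destruct (Hc (cl a b x) (cl_in a b x Hab) eps Heps) as [d [Hd Hd']].
  exists d; split; [lra|].
  intros y [_ Hy].
  apply Hd'. apply HJ, cl_in, Hab.
  eapply Rle_lt_trans. apply cl_lip; lra. exact Hy.
Qed.

Lemma C2 J f a b x d : (forall x, a <= x <= b -> J x) -> a < x < b ->
  has_deriv_within J f d x -> derivable_pt_lim (fun y => f (cl a b y)) x d.
Proof.
  intros HJ Hx Hd eps Heps.
  destruct (Hd eps Heps) as [del [Hdel H]].
  assert (Hp : 0 < Rmin del (Rmin (x - a) (b - x))).
  { repeat apply Rmin_pos; lra. }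
  exists (mkposreal _ Hp). intros h Hh0 Hh. simpl in Hh.
  assert (Hm1 := Rmin_l del (Rmin (x - a) (b - x))).
  assert (Hm2 := Rmin_r del (Rmin (x - a) (b - x))).
  assert (Hm3 := Rmin_l (x - a) (b - x)).
  assert (Hm4 := Rmin_r (x - a) (b - x)).
  assert (Hh' : - h <= Rabs h /\ h <= Rabs h) by (unfold Rabs; destruct Rcase_abs; lra).
  rewrite (cl_id a b (x + h)) by lra.
  rewrite (cl_id a b x) by lra.
  specialize (H (x + h)).
  replace (x + h - x) with h in H by ring.
  apply H. apply HJ; lra. lra. lra.
Qed.

Lemma C3 J f d x : has_deriv_within J f d x -> continuous_within J f x.
Proof.
  intros Hd eps Heps.
  destruct (Hd 1 Rlt_0_1) as [del [Hdel H]].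
  assert (Ha : 0 < Rabs d + 1) by (generalize (Rabs_pos d); lra).
  assert (Hp : 0 < Rmin del (eps / (Rabs d + 1))).
  { apply Rmin_pos; [lra| apply Rdiv_lt_0_compat; lra]. }
  exists (Rmin del (eps / (Rabs d + 1))); split; [exact Hp|].
  intros y Hy Hxy.
  assert (Hm1 := Rmin_l del (eps / (Rabs d + 1))).
  assert (Hm2 := Rmin_r del (eps / (Rabs d + 1))).
  destruct (Req_dec y x) as [->|Hne].
  { rewrite Rminus_diag, Rabs_R0; lra. }
  specialize (H y Hy Hne ltac:(lra)).
  assert (Hq : Rabs ((f y - f x) / (y - x)) < Rabs d + 1).
  { replace ((f y - f x) / (y - x)) with (((f y - f x) / (y - x) - d) + d) by ring.
    eapply Rle_lt_trans. apply Rabs_triang. lra. }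
  replace (f y - f x) with ((f y - f x) / (y - x) * (y - x)).
  2:{ field. lra. }
  rewrite Rabs_mult.
  assert (Hyx : 0 < Rabs (y - x)) by (apply Rabs_pos_lt; lra).
  apply Rle_lt_trans with ((Rabs d + 1) * Rabs (y - x)).
  - apply Rmult_le_compat_r; lra.
  - assert (Rabs (y - x) < eps / (Rabs d + 1)) by lra.
    apply (Rmult_lt_compat_l (Rabs d + 1)) in H0; [|lra].
    replace ((Rabs d + 1) * (eps / (Rabs d + 1))) with eps in H0 by (field; lra).
    exact H0.
Qed.

Lemma const_lem g a b : a < b -> (forall x, a <= x <= b -> continuity_pt g x) ->
  (forall x, a < x < b -> derivable_pt_lim g x 0) ->
  forall x, a <= x <= b -> g x = g a.
Proof.
  intros Hab Hc Hd.
  pose (pr := fun x (P : a < x < b) => exist (fun l => derivable_pt_lim g x l) 0 (Hd x P)).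
  intros x Hx.
  apply (null_derivative_loc g a b pr Hc (fun x P => eq_refl)). exact Hx.
Qed.
Lemma dext f x l l' : derivable_pt_lim f x l -> l = l' -> derivable_pt_lim f x l'.
Proof. intros H ->; exact H. Qed.
Lemma dplus f g x a b : derivable_pt_lim f x a -> derivable_pt_lim g x b ->
  derivable_pt_lim (fun y => f y + g y) x (a + b).
Proof. intros; apply (derivable_pt_lim_plus f g); auto. Qed.
Lemma dminus f g x a b : derivable_pt_lim f x a -> derivable_pt_lim g x b ->
  derivable_pt_lim (fun y => f y - g y) x (a - b).
Proof. intros; apply (derivable_pt_lim_minus f g); auto. Qed.
Lemma dmult f g x a b : derivable_pt_lim f x a -> derivable_pt_lim g x b ->
  derivable_pt_lim (fun y => f y * g y) x (a * g x + f x * b).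
Proof. intros; apply (derivable_pt_lim_mult f g); auto. Qed.
Lemma ddiv f g x a b : derivable_pt_lim f x a -> derivable_pt_lim g x b -> g x <> 0 ->
  derivable_pt_lim (fun y => f y / g y) x ((a * g x - b * f x) / (g x)²).
Proof. intros; apply (derivable_pt_lim_div f g); auto. Qed.
Lemma dconst k x : derivable_pt_lim (fun _ => k) x 0.
Proof. apply derivable_pt_lim_const. Qed.
Lemma did x : derivable_pt_lim (fun y => y) x 1.
Proof. apply derivable_pt_lim_id. Qed.
Lemma dsin f x a : derivable_pt_lim f x a -> derivable_pt_lim (fun y => sin (f y)) x (cos (f x) * a).
Proof. intros; apply (derivable_pt_lim_comp f sin); auto. apply derivable_pt_lim_sin. Qed.
Lemma dcos f x a : derivable_pt_lim f x a -> derivable_pt_lim (fun y => cos (f y)) x (- sin (f x) * a).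
Proof. intros; apply (derivable_pt_lim_comp f cos); auto. apply derivable_pt_lim_cos. Qed.

Lemma cplus f g x : continuity_pt f x -> continuity_pt g x -> continuity_pt (fun y => f y + g y) x.
Proof. intros; apply (continuity_pt_plus f g); auto. Qed.
Lemma cminus f g x : continuity_pt f x -> continuity_pt g x -> continuity_pt (fun y => f y - g y) x.
Proof. intros; apply (continuity_pt_minus f g); auto. Qed.
Lemma cmult f g x : continuity_pt f x -> continuity_pt g x -> continuity_pt (fun y => f y * g y) x.
Proof. intros; apply (continuity_pt_mult f g); auto. Qed.
Lemma cdiv f g x : continuity_pt f x -> continuity_pt g x -> g x <> 0 -> continuity_pt (fun y => f y / g y) x.
Proof. intros; apply (continuity_pt_div f g); auto. Qed.
Lemma cconst k x : continuity_pt (fun _ => k) x.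
Proof. apply continuity_pt_const; intros ? ?; reflexivity. Qed.
Lemma cid x : continuity_pt (fun y => y) x.
Proof. apply derivable_continuous_pt, derivable_pt_id. Qed.
Lemma csin f x : continuity_pt f x -> continuity_pt (fun y => sin (f y)) x.
Proof. intros; apply (continuity_pt_comp f sin); auto. apply continuity_sin. Qed.
Lemma ccos f x : continuity_pt f x -> continuity_pt (fun y => cos (f y)) x.
Proof. intros; apply (continuity_pt_comp f cos); auto. apply continuity_cos. Qed.

Lemma stage1 (tau : R) (J : R -> Prop) (theta omega : R -> R) (E a b : R)
  (Hab : a < b) (HJab : forall x, a <= x <= b -> J x) (H0 : a <= 0 <= b)
  (Hrange : forall s, J s -> - (PI / 2) < theta s < PI / 2)
  (Htheta : forall s, J s -> has_deriv_within J theta (omega s) s)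
  (Homega : forall s, J s ->
     has_deriv_within J omega (- tau ^ 2 * tan (theta s) / (cos (theta s)) ^ 2) s)
  (Htheta0 : theta 0 = 0)
  (HE : forall s, J s -> E ^ 2 = omega s ^ 2 + tau ^ 2 * tan (theta s) ^ 2)
  (Hpos : 0 < E ^ 2 + tau ^ 2) :
  forall x, a <= x <= b ->
    sin (theta x) = omega 0 / sqrt (E ^ 2 + tau ^ 2) * sin (sqrt (E ^ 2 + tau ^ 2) * x).
Proof.
  set (Om := sqrt (E ^ 2 + tau ^ 2)).
  assert (HOm2 : Om * Om = E ^ 2 + tau ^ 2) by (apply sqrt_sqrt; lra).
  assert (HOm : 0 < Om) by (apply sqrt_lt_R0; lra).
  set (w0 := omega 0).
  set (Th := fun y => theta (cl a b y)).
  set (W := fun y => omega (cl a b y)).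
  set (v := fun y => W y * cos (Th y) - w0 * cos (Om * y)).
  set (z := fun y => sin (Th y) - w0 / Om * sin (Om * y)).
  set (F := fun y => v y * v y + Om * Om * (z y * z y)).
  assert (HcTh : continuity Th).
  { apply C1 with J; try lra; auto. intros; eapply C3; apply Htheta; auto. }
  assert (HcW : continuity W).
  { apply C1 with J; try lra; auto. intros; eapply C3; apply Homega; auto. }
  assert (HcF : forall x, continuity_pt F x).
  { intro x. unfold F, v, z.
    repeat first [ apply cminus | apply cplus | apply cmult | apply csin | apply ccos
                 | apply cconst | apply cid | apply HcTh | apply HcW ].  }
  assert (HdF : forall x, a < x < b -> derivable_pt_lim F x 0).
  { intros x Hx.
    assert (HJx : J x) by (apply HJab; lra).
    assert (dTh : derivable_pt_lim Th x (omega x)) by (apply C2 with J; auto).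
    assert (dW : derivable_pt_lim W x (- tau ^ 2 * tan (theta x) / (cos (theta x)) ^ 2))
      by (apply C2 with J; auto).
    assert (dOm : derivable_pt_lim (fun y => Om * y) x Om).
    { eapply dext. apply (dmult (fun _ => Om) (fun y => y) x 0 1 (dconst _ _) (did _)). ring. }
    assert (dv : derivable_pt_lim v x (- Om * Om * z x)).
    { eapply dext. unfold v.
      apply dminus. apply dmult. exact dW. apply dcos. exact dTh.
      apply dmult. apply dconst. apply dcos. exact dOm.
      unfold z, W, Th. rewrite !cl_id by lra.
      assert (Hc : 0 < cos (theta x)) by (apply cos_gt_0; apply Hrange in HJx; lra).
      assert (Hsc := sin2_cos2 (theta x)). unfold Rsqr in Hsc.
      assert (Hw := HE x HJx). unfold tan in *.
      set (s := sin (theta x)) in *. set (c := cos (theta x)) in *. set (w := omega x) in *.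
      apply Rminus_diag_uniq.
      match goal with |- ?L - ?R = 0 =>
        replace (L - R) with (tau^2 * s * (s*s + c*c - 1) / c^2 + s * (E^2 - w^2 - tau^2*(s/c)^2) + s * (Om * Om - E^2 - tau^2)) end.
      rewrite Hsc, HOm2, Hw. field. lra.
      field. lra. }
    assert (dz : derivable_pt_lim z x (v x)).
    { eapply dext. unfold z.
      apply dminus. apply dsin. exact dTh.
      apply dmult. apply dconst. apply dsin. exact dOm.
      unfold v, W, Th. rewrite !cl_id by lra. field. lra. }
    eapply dext. unfold F.
    apply dplus. apply dmult; [exact dv | exact dv].
    apply dmult. apply dconst. apply dmult; [exact dz | exact dz].
    cbv beta; ring. }
  assert (HF0 : F 0 = 0).
  { unfold F, v, z, W, Th. rewrite !cl_id by lra. rewrite Htheta0, Rmult_0_r, cos_0, sin_0.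
    fold w0. ring. }
  assert (HFc := const_lem F a b Hab (fun x _ => HcF x) HdF).
  intros x Hx.
  assert (HFx : F x = 0) by (rewrite (HFc x Hx), <- (HFc 0 H0); exact HF0).
  assert (Hz : z x = 0).
  { unfold F in HFx. cbv beta in HFx.
    assert (0 <= v x * v x) by apply (Rle_0_sqr (v x)).
    assert (0 <= z x * z x) by apply (Rle_0_sqr (z x)).
    assert (0 < Om * Om) by nra.
    assert (Hzz : z x * z x = 0).
    { apply Rle_antisym; [|lra].
      apply (Rmult_le_reg_l (Om * Om)); [lra|]. nra. }
    destruct (Rmult_integral _ _ Hzz); auto. }
  unfold z, Th in Hz. rewrite cl_id in Hz by lra. lra.
Qed.

Lemma hdw_lin J f d x k t : has_deriv_within J f d x ->
  has_deriv_within J (fun y => f y - k + t * y) (d + t) x.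
Proof.
  intros H eps Heps. destruct (H eps Heps) as [del [Hd H']].
  exists del; split; auto. intros y Hy Hne Hl.
  replace ((f y - k + t * y - (f x - k + t * x)) / (y - x) - (d + t))
    with ((f y - f x) / (y - x) - d) by (field; lra).
  auto.
Qed.

Lemma stage2 (tau : R) (J : R -> Prop) (theta omega phi : R -> R) (E a b : R)
  (Hab : a < b) (HJab : forall x, a <= x <= b -> J x) (H0 : a <= 0 <= b)
  (Hrange : forall s, J s -> - (PI / 2) < theta s < PI / 2)
  (Htheta : forall s, J s -> has_deriv_within J theta (omega s) s)
  (Homega : forall s, J s ->
     has_deriv_within J omega (- tau ^ 2 * tan (theta s) / (cos (theta s)) ^ 2) s)
  (Htheta0 : theta 0 = 0)
  (HE : forall s, J s -> E ^ 2 = omega s ^ 2 + tau ^ 2 * tan (theta s) ^ 2)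
  (Hpos : 0 < E ^ 2 + tau ^ 2)
  (Hphi : forall s, J s -> has_deriv_within J phi (tau * tan (theta s) ^ 2) s) :
  forall x, a <= x <= b ->
    tau / sqrt (E ^ 2 + tau ^ 2) * sin (sqrt (E ^ 2 + tau ^ 2) * x)
      * cos (phi x - phi 0 + tau * x)
    = cos (sqrt (E ^ 2 + tau ^ 2) * x) * sin (phi x - phi 0 + tau * x).
Proof.
  assert (Hs1 := stage1 tau J theta omega E a b Hab HJab H0 Hrange Htheta Homega Htheta0 HE Hpos).
  set (Om := sqrt (E ^ 2 + tau ^ 2)) in *.
  assert (HOm2 : Om * Om = E ^ 2 + tau ^ 2) by (apply sqrt_sqrt; lra).
  assert (HOm : 0 < Om) by (apply sqrt_lt_R0; lra).
  assert (Hw0 : omega 0 * omega 0 = E ^ 2).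
  { rewrite (HE 0) by (apply HJab; lra). rewrite Htheta0, tan_0. ring. }
  set (T := fun y => cos (Om * y) * cos (Om * y) + tau / Om * (tau / Om) * (sin (Om * y) * sin (Om * y))).
  assert (HT : forall y, a <= y <= b -> T y = cos (theta y) * cos (theta y) /\ 0 < T y).
  { intros y Hy.
    assert (Hc : 0 < cos (theta y)) by (apply cos_gt_0; apply HJab, Hrange in Hy; lra).
    assert (Hsc := sin2_cos2 (theta y)). unfold Rsqr in Hsc.
    assert (Hsc' := sin2_cos2 (Om * y)). unfold Rsqr in Hsc'.
    assert (Heq : T y = cos (theta y) * cos (theta y)).
    { apply Rminus_diag_uniq. unfold T.
      match goal with |- ?L - ?R = 0 =>
        replace (L - R) with (- (sin (theta y) * sin (theta y) + cos (theta y) * cos (theta y) - 1)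
          + (sin (Om * y) * sin (Om * y) + cos (Om * y) * cos (Om * y) - 1)
          - (sin (Om * y) * sin (Om * y)) * (Om * Om - E^2 - tau^2) / (Om * Om)
          + (sin (Om * y) * sin (Om * y)) * (omega 0 * omega 0 - E ^ 2) / (Om * Om)) end.
      rewrite Hsc, Hsc', HOm2, Hw0. field. lra.
      rewrite (Hs1 y Hy). field. lra. }
    split; auto. rewrite Heq. nra. }
  set (Dc := fun y => phi (cl a b y) - phi 0 + tau * cl a b y).
  set (N := fun y => tau / Om * sin (Om * y) * cos (Dc y) - cos (Om * y) * sin (Dc y)).
  set (G := fun y => N y * N y / T y).
  assert (HdD : forall s, J s -> has_deriv_within J (fun y => phi y - phi 0 + tau * y)
                                   (tau * tan (theta s) ^ 2 + tau) s).
  { intros; apply hdw_lin; auto. }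
  assert (HcD : continuity Dc).
  { apply (C1 J (fun y => phi y - phi 0 + tau * y)); try lra; auto.
    intros; eapply C3; apply HdD; auto. }
  assert (HcG : forall x, a <= x <= b -> continuity_pt G x).
  { intros x Hx. unfold G. apply cdiv.
    2:{ unfold T; repeat first [ apply cminus | apply cplus | apply cmult | apply csin | apply ccos
                 | apply cconst | apply cid ]. }
    2:{ destruct (HT x Hx); lra. }
    unfold N; repeat first [ apply HcD | apply cminus | apply cplus | apply cmult | apply csin | apply ccos
                 | apply cconst | apply cid | apply HcD ]. }
  assert (HdG : forall x, a < x < b -> derivable_pt_lim G x 0).
  { intros x Hx.
    assert (HJx : J x) by (apply HJab; lra).
    destruct (HT x ltac:(lra)) as [HTx HTp].
    assert (dOm : derivable_pt_lim (fun y => Om * y) x Om).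
    { eapply dext. apply (dmult (fun _ => Om) (fun y => y) x 0 1 (dconst _ _) (did _)). ring. }
    assert (dD : derivable_pt_lim Dc x (tau / T x)).
    { eapply dext. apply (C2 J (fun y => phi y - phi 0 + tau * y)); auto.
      rewrite HTx. 
      assert (Hc : 0 < cos (theta x)) by (apply cos_gt_0; apply Hrange in HJx; lra).
      assert (Hsc := sin2_cos2 (theta x)). unfold Rsqr in Hsc.
      unfold tan. apply Rminus_diag_uniq.
      match goal with |- ?L - ?R = 0 =>
        replace (L - R) with (tau * (sin (theta x) * sin (theta x) + cos (theta x) * cos (theta x) - 1)
           / (cos (theta x) * cos (theta x))) end.
      rewrite Hsc. field. lra. field. lra. }
    set (C := cos (Om * x)). set (S := sin (Om * x)).
    set (Tp := 2 * Om * S * C * (tau / Om * (tau / Om) - 1)).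
    assert (dT : derivable_pt_lim T x Tp).
    { eapply dext. unfold T.
      repeat first [ apply dminus | apply dplus | apply dmult | apply dsin; exact dOm
                   | apply dcos; exact dOm | apply dconst ].
      unfold Tp, C, S. ring. }
    assert (dN : derivable_pt_lim N x (N x * Tp / (2 * T x))).
    { eapply dext. unfold N.
      repeat first [ apply dminus | apply dplus | apply dmult | apply dsin; exact dOm
                   | apply dcos; exact dOm | apply dsin; exact dD | apply dcos; exact dD
                   | apply dconst ].
      fold C S. unfold Tp, N. fold C S.
      assert (Hsc' := sin2_cos2 (Om * x)). unfold Rsqr in Hsc'. fold C S in Hsc'.
      apply Rminus_diag_uniq.
      match goal with |- ?L - ?R = 0 =>
        replace (L - R) with (Om * (S * S + C * C - 1) * (tau / Om * C * cos (Dc x)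
            + tau / Om * (tau / Om) * S * sin (Dc x)) / T x) end.
      rewrite Hsc'. field. lra.
      unfold T. fold C S. field. split; [lra|].
      unfold T in HTp; fold C S in HTp.
      replace (C * C * (Om * Om) + tau * tau * (S * S)) with
        ((C * C + tau / Om * (tau / Om) * (S * S)) * (Om * Om)) by (field; lra).
      apply Rgt_not_eq. apply Rmult_lt_0_compat; nra. }
    eapply dext. unfold G. apply ddiv. apply dmult; exact dN. exact dT. lra.
    unfold Rsqr. field. lra. }
  assert (HG0 : G 0 = 0).
  { unfold G, N, Dc. rewrite !cl_id by lra. rewrite Rmult_0_r, Rmult_0_r, sin_0, cos_0.
    replace (phi 0 - phi 0 + 0) with 0 by ring. rewrite sin_0. field.
    unfold T. rewrite Rmult_0_r, sin_0, cos_0. lra. }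
  assert (HGc := const_lem G a b Hab HcG HdG).
  intros x Hx.
  assert (HGx : G x = 0) by (rewrite (HGc x Hx), <- (HGc 0 H0); exact HG0).
  destruct (HT x Hx) as [_ HTp].
  assert (HN : N x = 0).
  { unfold G in HGx.
    assert (Hnn : N x * N x = 0).
    { replace (N x * N x) with (N x * N x / T x * T x) by (field; lra). rewrite HGx; ring. }
    destruct (Rmult_integral _ _ Hnn); auto. }
  unfold N, Dc in HN. rewrite cl_id in HN by lra. lra.
Qed.
Lemma small_zero k : sin (2 * k) = 0 -> - (PI / 4) <= k <= PI / 4 -> k = 0.
Proof.
  intros Hs Hk. assert (HP := PI_RGT_0).
  destruct (Rtotal_order k 0) as [Hl|[He|Hg]]; auto.
  - assert (sin (2 * k) < 0) by (apply sin_lt_0_var; lra). lra.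
  - assert (0 < sin (2 * k)) by (apply sin_gt_0; lra). lra.
Qed.

Lemma ivt_lem K u v p q : continuity K -> u <= p <= v -> u <= q <= v ->
  (forall t, u <= t <= v -> sin (2 * K t) = 0) -> K p = 0 -> K q = 0.
Proof.
  intros Hc Hp Hq Hs Hkp. assert (HP := PI_RGT_0).
  assert (Hgen : forall (f : R -> R), continuity f -> f p * f q <= 0 ->
            exists z, u <= z <= v /\ f z = 0).
  { intros f Hf Hpr. destruct (Rle_dec p q).
    - destruct (IVT_cor f p q Hf r Hpr) as [z [Hz1 Hz2]]. exists z; split; auto; lra.
    - assert (Hpr' : f q * f p <= 0) by lra.
      destruct (IVT_cor f q p Hf ltac:(lra) Hpr') as [z [Hz1 Hz2]]. exists z; split; auto; lra. }
  destruct (Rle_dec (K q) (PI / 4)); destruct (Rle_dec (- (PI / 4)) (K q)).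
  - apply small_zero; auto.
  - destruct (Hgen (fun t => K t + PI / 4)) as [z [Hz Hfz]].
    { intro x; apply continuity_pt_plus; [apply Hc| apply continuity_pt_const; intros ? ?; auto]. }
    { rewrite Hkp. nra. }
    assert (K z = 0) by (apply small_zero; [apply Hs; auto| lra]). lra.
  - destruct (Hgen (fun t => K t - PI / 4)) as [z [Hz Hfz]].
    { intro x; apply continuity_pt_minus; [apply Hc| apply continuity_pt_const; intros ? ?; auto]. }
    { rewrite Hkp. nra. }
    assert (K z = 0) by (apply small_zero; [apply Hs; auto| lra]). lra.
  - lra.
Qed.

Lemma density a b x del Om : a < b -> a <= x <= b -> 0 < del -> 0 < Om ->
  exists y, a <= y <= b /\ Rabs (y - x) < del /\ cos (Om * y) <> 0.
Proof.
  intros Hab Hx Hd HOm. assert (HP := PI_RGT_0).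
  set (r := Rmin del (Rmin (b - a) (PI / Om)) / 2).
  assert (Hr1 : 0 < r).
  { unfold r. apply Rdiv_lt_0_compat; [|lra]. repeat apply Rmin_pos; try lra.
    apply Rdiv_lt_0_compat; lra. }
  assert (Hm1 := Rmin_l del (Rmin (b - a) (PI / Om))).
  assert (Hm2 := Rmin_r del (Rmin (b - a) (PI / Om))).
  assert (Hm3 := Rmin_l (b - a) (PI / Om)).
  assert (Hm4 := Rmin_r (b - a) (PI / Om)).
  assert (Hr2 : r < del) by (unfold r in *; lra).
  assert (Hr3 : 2 * r <= b - a) by (unfold r in *; lra).
  assert (Hr4 : Om * r < PI).
  { assert (r < PI / Om) by (unfold r in *; lra).
    apply (Rmult_lt_compat_l Om) in H; [|lra]. replace (Om * (PI / Om)) with PI in H by (field; lra). lra. }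
  assert (Hkey : forall y1 y2, y1 < y2 -> y2 - y1 = r / 2 ->
            cos (Om * y1) <> 0 \/ cos (Om * y2) <> 0).
  { intros y1 y2 Hy Hy2.
    destruct (Req_dec (cos (Om * y1)) 0) as [E1|E1]; [|left; auto].
    destruct (Req_dec (cos (Om * y2)) 0) as [E2|E2]; [|right; auto].
    exfalso.
    assert (Hsn : 0 < sin (Om * y2 - Om * y1)).
    { replace (Om * y2 - Om * y1) with (Om * (r / 2)) by (rewrite <- Hy2; ring).
      apply sin_gt_0; nra. }
    rewrite sin_minus, E1, E2 in Hsn. lra. }
  assert (Habs : forall t, - del < t < del -> Rabs t < del)
    by (intros t Ht; unfold Rabs; destruct Rcase_abs; lra).
  destruct (Rle_dec (x + r) b).
  - destruct (Hkey (x + r / 2) (x + r) ltac:(lra) ltac:(lra)).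
    + exists (x + r / 2). split; [lra|]. split; auto. apply Habs; lra.
    + exists (x + r). split; [lra|]. split; auto. apply Habs; lra.
  - destruct (Hkey (x - r) (x - r / 2) ltac:(lra) ltac:(lra)).
    + exists (x - r). split; [lra|]. split; auto. apply Habs; lra.
    + exists (x - r / 2). split; [lra|]. split; auto. apply Habs; lra.
Qed.

Lemma tanD_lem c u D : c * sin u * cos D = cos u * sin D -> cos u <> 0 ->
  cos D <> 0 /\ tan D = c * tan u.
Proof.
  intros H Hc.
  assert (HcD : cos D <> 0).
  { intro E0. rewrite E0 in H. assert (Hs := sin2_cos2 D). unfold Rsqr in Hs. rewrite E0 in Hs.
    assert (cos u * sin D = 0) by lra.
    destruct (Rmult_integral _ _ H0); [auto| nra]. }
  split; auto. unfold tan. field_simplify; auto.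
  apply (Rmult_eq_reg_r (cos D * cos u)); [|apply Rmult_integral_contrapositive; auto].
  field_simplify; auto. lra.
Qed.

Lemma sin2_lem c u A D : c * sin u * cos D = cos u * sin D -> cos u <> 0 ->
  tan A = c * tan u -> sin (2 * (A - D)) = 0.
Proof.
  intros H Hc HA. destruct (tanD_lem c u D H Hc) as [HcD HtD].
  rewrite sin_2a, sin_minus, cos_minus.
  destruct (Req_dec (cos A) 0) as [E0|E0].
  - unfold tan, Rdiv in HA. rewrite E0, Rinv_0, Rmult_0_r in HA.
    assert (Hs : c * sin u = 0).
    { apply (Rmult_eq_reg_r (/ cos u)). lra. apply Rinv_neq_0_compat; auto. }
    rewrite Hs, Rmult_0_l in H.
    assert (sin D = 0) by (destruct (Rmult_integral _ _ (eq_sym H)); [contradiction| auto]).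
    rewrite E0, H0. ring.
  - rewrite <- HtD in HA. unfold tan in HA.
    assert (sin A * cos D = cos A * sin D).
    { apply (Rmult_eq_reg_r (/ cos A * / cos D)).
      replace (sin A * cos D * (/ cos A * / cos D)) with (sin A / cos A) by (field; auto).
      rewrite HA. field; auto.
      apply Rmult_integral_contrapositive; split; apply Rinv_neq_0_compat; auto. }
    replace (sin A * cos D - cos A * sin D) with 0 by lra. ring.
Qed.

Lemma interval_ab (J : R -> Prop) s : is_interval J -> J 0 -> J s ->
  forall x, Rmin 0 s <= x <= Rmax 0 s -> J x.
Proof.
  intros HJ H0 Hs x Hx. unfold Rmin, Rmax in Hx.
  destruct (Rle_dec 0 s); [apply (HJ 0 s) | apply (HJ s 0)]; auto; lra.
Qed.

Theorem lemma4p15 (tau : R) (J : R -> Prop) (theta omega phi : R -> R) (E : R)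
  (HJ : is_interval J) (HJ0 : J 0)
  (Hrange : forall s, J s -> - (PI / 2) < theta s < PI / 2)
  (Htheta : forall s, J s -> has_deriv_within J theta (omega s) s)
  (Homega : forall s, J s ->
     has_deriv_within J omega (- tau ^ 2 * tan (theta s) / (cos (theta s)) ^ 2) s)
  (Htheta0 : theta 0 = 0)
  (HE0 : 0 <= E)
  (HE : forall s, J s -> E ^ 2 = omega s ^ 2 + tau ^ 2 * tan (theta s) ^ 2)
  (Hpos : 0 < E ^ 2 + tau ^ 2)
  (Hphi : forall s, J s -> has_deriv_within J phi (tau * tan (theta s) ^ 2) s) :
  let Om := sqrt (E ^ 2 + tau ^ 2) in
  (exists A, A_spec J tau Om A) /\
  (forall A, A_spec J tau Om A ->
     forall s, J s -> phi s - phi 0 = A s - tau * s).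
Proof.
  intro Om.
  assert (HOm : 0 < Om) by (apply sqrt_lt_R0; lra).
  set (D := fun y => phi y - phi 0 + tau * y).
  assert (HdD : forall s, J s -> has_deriv_within J D (tau * tan (theta s) ^ 2 + tau) s).
  { intros; apply hdw_lin; auto. }
  assert (HN : forall s, J s -> s <> 0 -> forall x, Rmin 0 s <= x <= Rmax 0 s ->
             tau / Om * sin (Om * x) * cos (D x) = cos (Om * x) * sin (D x)).
  { intros s Hs Hs0 x Hx. unfold D, Om.
    apply (stage2 tau J theta omega phi E (Rmin 0 s) (Rmax 0 s)); auto.
    - unfold Rmin, Rmax; destruct Rle_dec; lra.
    - apply interval_ab; auto.
    - unfold Rmin, Rmax; destruct Rle_dec; lra. }
  assert (HND : forall s, J s -> tau / Om * sin (Om * s) * cos (D s) = cos (Om * s) * sin (D s)).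
  { intros s Hs. destruct (Req_dec s 0) as [->|Hs0].
    - unfold D. replace (phi 0 - phi 0 + tau * 0) with 0 by ring.
      rewrite Rmult_0_r, sin_0, cos_0. ring.
    - apply (HN s Hs Hs0). unfold Rmin, Rmax; destruct Rle_dec; lra. }
  assert (HDspec : A_spec J tau Om D).
  { split; [|split].
    - intros s Hs. eapply C3. apply HdD; auto.
    - unfold D; ring.
    - intros s Hs Hc. apply tanD_lem; auto. }
  split; [exists D; exact HDspec|].
  intros A [HAc [HA0 HAt]] s Hs.
  destruct (Req_dec s 0) as [->|Hs0].
  { rewrite HA0. ring. }
  set (a := Rmin 0 s). set (b := Rmax 0 s).
  assert (Hab : a < b) by (unfold a, b, Rmin, Rmax; destruct Rle_dec; lra).
  assert (HJab : forall x, a <= x <= b -> J x) by (apply interval_ab; auto).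
  assert (H0 : a <= 0 <= b) by (unfold a, b, Rmin, Rmax; destruct Rle_dec; lra).
  assert (Hsab : a <= s <= b) by (unfold a, b, Rmin, Rmax; destruct Rle_dec; lra).
  set (K := fun y => A (cl a b y) - D (cl a b y)).
  assert (HcK : continuity K).
  { intro x. unfold K. apply cminus.
    - apply (C1 J A a b); auto; lra.
    - apply (C1 J D a b); auto; try lra. intros; eapply C3; apply HdD; auto. }
  assert (H1 : forall x, a <= x <= b -> cos (Om * x) <> 0 -> sin (2 * K x) = 0).
  { intros x Hx Hc. unfold K. rewrite cl_id by lra.
    apply (sin2_lem (tau / Om) (Om * x)); auto. }
  assert (H2 : forall x, a <= x <= b -> sin (2 * K x) = 0).
  { intros x Hx.
    destruct (Req_dec (sin (2 * K x)) 0) as [Hz|Hnz]; auto. exfalso.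
    assert (Hc : continuity_pt (fun y => sin (2 * K y)) x).
    { apply csin. apply cmult. apply cconst. apply HcK. }
    unfold continuity_pt, continue_in, limit1_in, limit_in in Hc; simpl in Hc; unfold R_dist in Hc.
    destruct (Hc (Rabs (sin (2 * K x)))) as [alp [Halp Hy]].
    { apply Rabs_pos_lt; auto. }
    destruct (density a b x alp Om Hab Hx Halp HOm) as [y [Hya [Hyd Hyc]]].
    destruct (Req_dec x y) as [<-|Hxy].
    { apply Hnz, H1; auto. }
    specialize (Hy y (conj (conj I Hxy) Hyd)).
    rewrite (H1 y Hya Hyc) in Hy. rewrite Rminus_0_l, Rabs_Ropp in Hy. lra. }
  assert (HK0 : K 0 = 0).
  { unfold K. rewrite cl_id by lra. rewrite HA0. unfold D. ring. }
  assert (HKs := ivt_lem K a b 0 s HcK H0 Hsab H2 HK0).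
  unfold K in HKs. rewrite cl_id in HKs by lra. unfold D in HKs. lra.
Qed.
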